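(* Let $a,b$ be nonnegative integers and let $G$ be a finite $(a,b)$-valent group. Then either $G$ has trivial soluble radical (i.e. $G$ has no nontrivial soluble normal subgroup), or $G$ has a minimal normal subgroup $N$ which is elementary abelian (isomorphic to $\mathbb{Z}_p^d$ for some prime $p$ and $d\ge1$) such that $G/N$ is a sub-$(a,b)$-valent group.
   Context: An involution is an element of order $2$. A subset $S$ of a group $G$ is a Cayley set of $G$ if $1\notin S$, $S$ is inverse-closed, and $S$ generates $G$. On pairs of nonnegative integers define $(a',b')\preccurlyeq(a,b)$ if and only if $b'\le b$ and $a'\le a+(b-b')/2$. A Cayley set is $(a,b)$-valent if it consists of exactly $a$ involutions and $b$ non-involutions, and sub-$(a,b)$-valent if it consists of $a'$ involutions and $b'$ non-involutions with $(a',b')\preccurlyeq(a,b)$. A group is $(a,b)$-valent (resp. sub-$(a,b)$-valent) if it has an $(a,b)$-valent (resp. sub-$(a,b)$-valent) Cayley set. The soluble radical of $G$ is its largest soluble normal subgroup. (The paper phrases the second alternative as ''$G$ is a direct elementary abelian extension of a sub-$(a,b)$-valent group'', where an extension of $Q$ by $N$ with $G/N\cong Q$ is direct if $N$ is a minimal normal subgroup of $G$ and elementary abelian if $N$ is elementary abelian.) *)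

(* Defs.v *)
From mathcomp Require Import all_boot all_fingroup all_solvable.
Set Implicit Arguments. Unset Strict Implicit. Unset Printing Implicit Defensive.
Local Open Scope group_scope.

Section Valency.
Variable gT : finGroupType.

Definition involution (x : gT) : bool := #[x] == 2%N.

Definition cayley_set (G : {group gT}) (S : {set gT}) : Prop :=
  [/\ S \subset G, 1 \notin S, {in S, forall x, x^-1 \in S} & <<S>> = G].

Definition n_inv (S : {set gT}) : nat := #|[set x in S | involution x]|.
Definition n_noninv (S : {set gT}) : nat := #|[set x in S | ~~ involution x]|.

Definition valent_set (a b : nat) (G : {group gT}) (S : {set gT}) : Prop :=
  cayley_set G S /\ n_inv S = a /\ n_noninv S = b.

(* (a',b') <= (a,b) iff b' <= b and a' <= a + (b-b')/2 (rational division,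
   equivalently 2a' <= 2a + (b - b')). *)
Definition valprec (a' b' a b : nat) : Prop :=
  (b' <= b)%N /\ (2 * a' <= 2 * a + (b - b'))%N.

Definition subvalent_set (a b : nat) (G : {group gT}) (S : {set gT}) : Prop :=
  cayley_set G S /\ valprec (n_inv S) (n_noninv S) a b.

Definition valent_group (a b : nat) (G : {group gT}) : Prop :=
  exists S : {set gT}, valent_set a b G S.

Definition subvalent_group (a b : nat) (G : {group gT}) : Prop :=
  exists S : {set gT}, subvalent_set a b G S.

Definition trivial_solrad (G : {group gT}) : Prop :=
  forall N : {group gT}, N <| G -> solvable N -> N :=: 1.

End Valency.

(* Main.v *)
Require Import Defs.
From mathcomp Require Import all_boot all_fingroup all_solvable.
From mathcomp Require Import zify.
Set Implicit Arguments. Unset Strict Implicit. Unset Printing Implicit Defensive.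
Local Open Scope group_scope.

Lemma fiber_count (T U : finType) (f : T -> U) (P : {set T}) (Y : {set U}) (w : nat) :
  (forall x, x \in P -> f x \in Y) ->
  (forall y, y \in Y -> w <= #|[set x in P | f x == y]|) ->
  #|Y| * w <= #|P|.
Proof.
move=> PY Yw.
rewrite -sum_nat_const -sum1_card (partition_big f (mem Y)) //=.
apply: leq_sum => y Yy.
rewrite (eq_bigl (mem [set x in P | f x == y])) ?sum1_card ?Yw // => x.
by rewrite !inE.
Qed.

Lemma ord_le2 (gT : finGroupType) (x : gT) : #[x] %| 2 -> x != 1 -> involution x.
Proof.
move=> d n1; rewrite /involution.
have := dvdn_leq (isT : 0 < 2) d; have := order_gt0 x.
rewrite -order_eq1 in n1; move: n1 d.
case: #[x] => [|[|[|k]]] //.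
Qed.

Section Count.
Variables (gT rT : finGroupType) (D : {group gT}) (f : {morphism D >-> rT}).
Variable S : {set gT}.
Hypotheses (sSD : S \subset D) (S1 : 1 \notin S) (SV : {in S, forall x, x^-1 \in S}).

Lemma count_quot :
  valprec (n_inv (f @: S)^#) (n_noninv (f @: S)^#) (n_inv S) (n_noninv S).
Proof.
set S' := (f @: S)^#.
set I := [set x in S | involution x]; set B := [set x in S | ~~ involution x].
set I' := [set x in S' | involution x]; set B' := [set x in S' | ~~ involution x].
set I2 := I' :\: f @: I.
have DS x : x \in S -> x \in D by move=> Sx; apply: (subsetP sSD).
have n1S x : x \in S -> x != 1 by move=> Sx; apply: contraNneq S1 => <-.
have invf x : x \in S -> involution x -> f x != 1 -> involution (f x).
  move=> Sx /eqP ix nf; apply: ord_le2 => //; rewrite -ix; exact: morph_order (DS x Sx).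
have hB' : forall y, y \in B' -> exists2 x, x \in B & f x = y.
  move=> y; rewrite !inE => /andP[/andP[ny /imsetP[x Sx defy]] ni]; subst y.
  exists x => //; rewrite inE Sx /=; apply: contra ni => ix; exact: invf Sx ix ny.
have hI2 : forall y, y \in I2 -> exists2 x, x \in B & [/\ x^-1 \in B, f x = y, f x^-1 = y & x != x^-1].
  move=> y; rewrite !inE => /andP[nfI /andP[/andP[ny /imsetP[x Sx defy]] iy]].
  have Bx : x \in B.
    rewrite inE Sx /=; apply: contra nfI => ix; apply/imsetP; exists x => //.
    by rewrite inE Sx.
  have fV : f x^-1 = y.
    rewrite morphV ?DS // -defy; apply/eqP; rewrite eq_invg_mul; apply/eqP.
    by move: iy => /eqP o2; have: y ^+ 2 = 1 by rewrite -o2 expg_order.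
  exists x => //; split => //.
    rewrite inE SV //= /involution orderV; by move: Bx; rewrite inE => /andP[].
  apply/eqP => xV; move: Bx; rewrite inE Sx /= => /negP; apply.
  apply: ord_le2; last exact: n1S.
  by rewrite order_dvdn expgS expg1 {2}xV mulgV.
set P1 := [set x in B | f x \in B']; set P2 := [set x in B | f x \in I2].
have c1 : #|B'| * 1 <= #|P1|.
  apply: (fiber_count (f:=f)) => [x|y By]; first by rewrite inE => /andP[].
  have [x Bx fx] := hB' y By.
  rewrite card_gt0; apply/set0Pn; exists x.
  by apply/setIdP; split; [apply/setIdP; split; rewrite ?fx | rewrite fx].
have c2 : #|I2| * 2 <= #|P2|.
  apply: (fiber_count (f:=f)) => [x|y Iy]; first by rewrite inE => /andP[].
  have [x Bx [BV fx fV nx]] := hI2 y Iy.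
  apply: (@leq_trans #|[set x; x^-1]|); first by rewrite cards2 nx.
  apply: subset_leq_card.
  apply/subsetP => z; rewrite !in_set2 => /orP[] /eqP ->.
    by apply/setIdP; split; [apply/setIdP; split; rewrite ?fx | rewrite fx].
  by apply/setIdP; split; [apply/setIdP; split; rewrite ?fV | rewrite fV].
have disj : P1 :&: P2 = set0.
  apply/setP => z; rewrite !inE; apply/negbTE.
  by case: (involution (f z)); rewrite ?andbF ?andbT /= ?andbF.
have cB : #|P1| + #|P2| <= #|B|.
  have := cardsU P1 P2; rewrite disj cards0 subn0 => <-.
  by apply: subset_leq_card; apply/subsetP => z; rewrite !inE => /orP[]/andP[].
have cI : #|I' :&: f @: I| <= #|I|.
  apply: leq_trans (leq_imset_card _ _); apply: subset_leq_card; exact: subsetIr.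
have := cardsID (f @: I) I'.
rewrite /valprec /n_inv /n_noninv -/I -/B -/I' -/B' -/S' -/I2.
lia.
Qed.
End Count.

Theorem lemma3p2 (gT : finGroupType) (G : {group gT}) (a b : nat) :
  valent_group a b G ->
  trivial_solrad G \/
  exists N : {group gT},
    [/\ minnormal N G, (exists p : nat, prime p /\ p.-abelem N)
      & subvalent_group a b (G / N)%G].
Proof.
move=> [S [[sSG S1 SV genS] [<- <-]]].
case: (boolP [exists N : {group gT}, [&& N <| G, solvable N & N :!=: 1]])
  => [/existsP[R /and3P[nRG solR ntR]] | /existsPn H]; last first.
  left => N nN sN; apply/eqP; have := H N; by rewrite nN sN /= negbK.
right; have nRG' : G \subset 'N(R) by case/andP: nRG.
have [M minM sMR] := minnormal_exists ntR nRG'.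
have [nMG ntM abM] := minnormal_solvable minM sMR solR.
have sSN : S \subset 'N(M) := subset_trans sSG nMG.
exists M; split => //.
  exists (pdiv #|M|); split => //; apply: pdiv_prime; by rewrite cardG_gt1.
exists ((coset M @: S)^#); split; last first.
  exact: (@count_quot _ _ _ (coset_morphism M) S sSN S1 SV).
split.
- apply/subsetP => y; rewrite in_setD1 => /andP[_ /imsetP[x Sx ->]].
  exact: mem_quotient (subsetP sSG x Sx).
- by rewrite in_setD1 eqxx.
- move=> y; rewrite !in_setD1 => /andP[ny /imsetP[x Sx defy]]; subst y.
  rewrite invg_eq1 ny /=; apply/imsetP; exists x^-1; first exact: SV.
  by rewrite morphV //; apply: (subsetP sSN).
- rewrite genD1id -morphimEsub // -morphim_gen // genS //.
Qed.
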